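(* Let $x, y \in \mathbb{R}^n$ with $y \ge 0$, and let $q \colon \mathbb{R}^n \times \mathbb{R}^n \to \mathbb{R}$ be defined by $q(x,y) := |x|^T y = \sum_{i=1}^n |x_i|\, y_i$. Then a vector $v \in \mathbb{R}^{2n}$ belongs to the limiting subdifferential $\partial q(x,y)$ if and only if $$v = \begin{pmatrix} y \circ s \\ |x| \end{pmatrix} \quad\text{for some } s \in \mathbb{R}^n \text{ with } s_i \in \begin{cases} \{1\}, & x_i > 0,\\ [-1,1], & x_i = 0,\\ \{-1\}, & x_i<0,\end{cases} \quad i=1,\dots,n.$$
   Context: $|x| := (|x_1|,\dots,|x_n|)^T$ and $\circ$ denotes the componentwise (Hadamard) product. For a nonempty closed set $Z$, the Fréchet normal cone at $z \in Z$ is the polar of the Bouligand tangent cone $T_Z(z)=\{d : \exists d^k\to d,\ t_k \searrow 0,\ z+t_kd^k \in Z\}$, and the limiting normal cone $N^{\lim}_Z(z)$ is the set of $v$ for which there exist $z^k \to z$ in $Z$ and $v^k \to v$ with $v^k$ in the Fréchet normal cone at $z^k$. For a lower semicontinuous function $h$, the limiting subdifferential is $\partial h(w) := \{ s : (s,-1) \in N^{\lim}_{\mathrm{epi}(h)}((w,h(w)))\}$. *)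

(* Defs.v *)
From HB Require Import structures.
From mathcomp Require Import all_boot all_order all_algebra.
From mathcomp Require Import all_classical all_reals all_analysis.
Set Implicit Arguments. Unset Strict Implicit. Unset Printing Implicit Defensive.
Import Order.TTheory GRing.Theory Num.Theory.
Import numFieldNormedType.Exports.
Local Open Scope classical_set_scope.
Local Open Scope ring_scope.

Definition dotv (R : realType) (p : nat) (u v : 'rV[R]_p) : R :=
  \sum_(i < p) u 0 i * v 0 i.

Definition tangent_cone (R : realType) (p : nat) (Z : set 'rV[R]_p)
  (z : 'rV[R]_p) : set 'rV[R]_p :=
  [set d | exists (dk : nat -> 'rV[R]_p) (tk : nat -> R),
      dk @ \oo --> d /\ tk @ \oo --> (0 : R) /\
      (forall k, 0 < tk k) /\ (forall k, tk k.+1 <= tk k) /\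
      (forall k, Z (z + tk k *: dk k))].

Definition frechet_normal_cone (R : realType) (p : nat) (Z : set 'rV[R]_p)
  (z : 'rV[R]_p) : set 'rV[R]_p :=
  [set v | forall d, tangent_cone Z z d -> dotv v d <= 0].

Definition limiting_normal_cone (R : realType) (p : nat) (Z : set 'rV[R]_p)
  (z : 'rV[R]_p) : set 'rV[R]_p :=
  [set v | exists (zk vk : nat -> 'rV[R]_p),
      zk @ \oo --> z /\ vk @ \oo --> v /\
      (forall k, Z (zk k)) /\ (forall k, frechet_normal_cone Z (zk k) (vk k))].

(* epigraph of h : R^m -> R, as a subset of R^(m+1) = R^m x R *)
Definition epigraph (R : realType) (m : nat) (h : 'rV[R]_m -> R) : set 'rV[R]_(m + 1) :=
  [set z | h (lsubmx z) <= rsubmx z 0 0].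

Definition limiting_subdiff (R : realType) (m : nat) (h : 'rV[R]_m -> R)
  (w : 'rV[R]_m) : set 'rV[R]_m :=
  [set s | limiting_normal_cone (epigraph h) (row_mx w (const_mx (h w)))
             (row_mx s (const_mx (-1)))].

Definition qfun (R : realType) (n : nat) (w : 'rV[R]_(n + n)) : R :=
  \sum_(i < n) `|lsubmx w 0 i| * rsubmx w 0 i.

(* Main.v *)
Require Import Defs.
From HB Require Import structures.
From mathcomp Require Import all_boot all_order all_algebra.
From mathcomp Require Import all_classical all_reals all_analysis.
Import Order.TTheory GRing.Theory Num.Theory.
Import numFieldNormedType.Exports.
Local Open Scope classical_set_scope.
Local Open Scope ring_scope.

Lemma coord_continuous (R : realType) m n (i : 'I_m) (j : 'I_n) :
  continuous (fun M : 'M[R]_(m, n) => M i j).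
Proof.
move=> u A /nbhs_ballP[e /= e0 eA].
apply/nbhs_ballP; exists e => //= v [_ uv]; apply: eA.
exact: uv.
Qed.

Lemma coord_cvg (R : realType) p (dk : nat -> 'rV[R]_p) (d : 'rV[R]_p) i :
  dk @ \oo --> d -> (fun k => dk k 0 i) @ \oo --> d 0 i.
Proof.
move=> H.
have := (@continuous_cvg _ _ _ _ _ dk (fun M : 'rV[R]_p => M 0 i) d (@coord_continuous R 1 p 0 i d) H).
move=> K. exact: K.
Qed.

Lemma sum_cvg (R : realType) T (F : set_system T) (FF : Filter F) p (f : 'I_p -> T -> R) (a : 'I_p -> R) :
  (forall i, f i @ F --> a i) ->
  (fun k => \sum_(i < p) f i k) @ F --> \sum_(i < p) a i.
Proof.
move=> H.
apply: cvg_big => //.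
exact: add_continuous.
Qed.

Lemma near_eq_lim (R : realType) (f g : nat -> R) (a b : R) :
  f @ \oo --> a -> g @ \oo --> b -> (\forall k \near \oo, f k = g k) -> a = b.
Proof.
move=> fa gb H; apply/le_anti/andP; split.
  by apply: (ler_cvg_to fa gb); apply: filterS H => k ->.
by apply: (ler_cvg_to gb fa); apply: filterS H => k ->.
Qed.

Lemma dotv_row_mx (R : realType) m1 m2 (a : 'rV[R]_m1) (b : 'rV[R]_m2)
  (d : 'rV[R]_(m1 + m2)) :
  dotv (row_mx a b) d = dotv a (lsubmx d) + dotv b (rsubmx d).
Proof.
rewrite /dotv big_split_ord /=; congr (_ + _); apply: eq_bigr => i _.
  by rewrite row_mxEl mxE.
by rewrite row_mxEr mxE.
Qed.

Lemma dotv1 (R : realType) (c : R) (d : 'rV[R]_1) :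
  dotv (const_mx c) d = c * d 0 0.
Proof. by rewrite /dotv big_ord1 mxE. Qed.

Lemma dotv_delta (R : realType) p (g : 'rV[R]_p) (a : R) j :
  dotv g (a *: delta_mx 0 j) = a * g 0 j.
Proof.
rewrite /dotv (bigD1 j) //= !mxE !eqxx /= big1 ?addr0; first by rewrite mulr1 mulrC.
by move=> k /negbTE nkj; rewrite !mxE nkj /= !mulr0.
Qed.

Lemma tangent_seg (R : realType) p (Z : set 'rV[R]_p) (z d : 'rV[R]_p) (c : R) :
  0 < c -> (forall t, 0 < t -> t <= c -> Z (z + t *: d)) -> tangent_cone Z z d.
Proof.
move=> c0 H; exists (fun=> d), (fun k => c * harmonic k).
split; first exact: cvg_cst.
split.
  rewrite -(mulr0 c); apply: cvgMl_tmp; exact: cvg_harmonic.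
have hp k : 0 < c * harmonic k by rewrite mulr_gt0 // harmonic_gt0.
split; first by [].
split.
  move=> k; rewrite ler_wpM2l // ?ltW //=.
  by rewrite ltf_pV2 ?posrE ?ltr0n // ltr_nat.
move=> k; apply: H => //.
by rewrite /= ler_pdivrMr ?ltr0n // ler_peMr ?(ltW c0) // ler1n.
Qed.

Lemma qfunE (R : realType) n (W : 'rV[R]_(n + n)) :
  qfun W = \sum_(i < n) `|W 0 (lshift n i)| * W 0 (rshift n i).
Proof. by apply: eq_bigr => i _; rewrite !mxE. Qed.

Lemma qfun_dir_l (R : realType) n (W : 'rV[R]_(n + n)) (t a : R) (i : 'I_n) :
  qfun (W + t *: (a *: delta_mx 0 (lshift n i))) =
  qfun W + (`|W 0 (lshift n i) + t * a| - `|W 0 (lshift n i)|) * W 0 (rshift n i).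
Proof.
rewrite !qfunE (bigD1 i) //= [X in _ = X + _](bigD1 i) //=.
rewrite !mxE !eqxx /= eq_rlshift /= !mulr1 mulr0 mulr0 addr0.
rewrite [RHS]addrAC; congr (_ + _); last first.
  apply: eq_bigr => k /negbTE nki.
  by rewrite !mxE eq_lshift nki eq_rlshift /= !mulr0 !addr0.
by rewrite mulrBl addrCA subrr addr0.
Qed.

Lemma qfun_dir_r (R : realType) n (W : 'rV[R]_(n + n)) (t a : R) (i : 'I_n) :
  qfun (W + t *: (a *: delta_mx 0 (rshift n i))) =
  qfun W + t * a * `|W 0 (lshift n i)|.
Proof.
rewrite !qfunE (bigD1 i) //= [X in _ = X + _](bigD1 i) //=.
rewrite !mxE !eqxx /= eq_lrshift /= !mulr1 mulr0 mulr0 addr0.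
rewrite [RHS]addrAC; congr (_ + _); last first.
  apply: eq_bigr => k /negbTE nki.
  by rewrite !mxE eq_rshift nki eq_lrshift /= !mulr0 !addr0.
by rewrite mulrDr [_ * (t * a)]mulrC.
Qed.

From mathcomp Require Import lra.

Lemma term_lower (R : realType) (X Y S A B t : R) :
  0 <= Y -> S * X = `|X| -> `|S| <= 1 -> 0 <= t ->
  `|X| * Y + t * (Y * S * A + `|X| * B) - t ^+ 2 * (`|A| * `|B|)
    <= `|X + t * A| * (Y + t * B).
Proof.
move=> Y0 SX S1 t0.
set P := `|X + t * A|.
have h1 : S * (X + t * A) <= P.
  apply: le_trans (ler_norm _) _.
  by rewrite normrM ler_piMl.
have h1' : Y * (`|X| + t * S * A) <= Y * P.
  apply: ler_wpM2l => //; apply: le_trans h1.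
  by rewrite mulrDr SX mulrA [S * t]mulrC.
have h2 : `|P - `|X| | <= t * `|A|.
  apply: le_trans (ler_dist_dist _ _) _.
  by rewrite addrAC subrr add0r normrM ger0_norm.
have h3 : - (t * `|B| * (t * `|A|)) <= t * B * (P - `|X|).
  rewrite lerNl; apply: le_trans (ler_norm _) _.
  rewrite normrN normrM normrM ger0_norm //.
  by apply: ler_wpM2l => //; rewrite mulr_ge0.
rewrite expr2.
move: h1' h3; rewrite !mulrDr ?mulrBr ?mulrDl.
lra.
Qed.

Lemma split_l m n (i : 'I_m) : fintype.split (lshift n i) = inl i.
Proof. exact: (unsplitK (inl i)). Qed.
Lemma split_r m n (i : 'I_n) : fintype.split (rshift m i) = inr i.
Proof. exact: (unsplitK (inr i)). Qed.

Definition Cf (R : realType) n (u : 'rV[R]_(n + n)) : R :=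
  \sum_(i < n) `|u 0 (lshift n i)| * `|u 0 (rshift n i)|.
Arguments Cf {R n}.

Lemma q_lower (R : realType) n (x y s : 'rV[R]_n)
  (hy : forall i, 0 <= y 0 i)
  (hs : forall i, s 0 i * x 0 i = `|x 0 i| /\ `|s 0 i| <= 1)
  (u : 'rV[R]_(n + n)) (t : R) : 0 <= t ->
  qfun (row_mx x y) +
   t * dotv (row_mx (\row_i (y 0 i * s 0 i)) (\row_i `|x 0 i|)) u
   - t ^+ 2 * Cf u
  <= qfun (row_mx x y + t *: u).
Proof.
move=> t0.
rewrite !qfunE dotv_row_mx /dotv /Cf -big_split /= !mulr_sumr -!big_split /=.
rewrite -sumrB; apply: ler_sum => i _.
rewrite !mxE !split_l !split_r.
have [h1 h2] := hs i.
by apply: term_lower.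
Qed.

Lemma dotv_continuous (R : realType) p (v : 'rV[R]_p) : continuous (dotv v).
Proof.
move=> u; rewrite /dotv.
apply: (@sum_cvg R _ (nbhs u) (nbhs_filter u) p (fun i (u' : 'rV[R]_p) => v 0 i * u' 0 i)) => i.
apply: cvgMl_tmp.
exact: (@coord_continuous R 1 p 0 i u).
Qed.

Lemma Cf_continuous (R : realType) n : continuous (@Cf R n).
Proof.
move=> u; rewrite /Cf.
apply: (@sum_cvg R _ (nbhs u) (nbhs_filter u) n (fun i (u' : 'rV[R]_(n + n)) =>
  `|u' 0 (lshift n i)| * `|u' 0 (rshift n i)|)) => i.
apply: cvgM; apply: cvg_norm.
  exact: (@coord_continuous R 1 (n + n) 0 (lshift n i) u).
exact: (@coord_continuous R 1 (n + n) 0 (rshift n i) u).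
Qed.

Lemma lsub_shift (R : realType) n (w : 'rV[R]_(n + n)) (c : R) (t : R)
  (D : 'rV[R]_(n + n + 1)) :
  lsubmx (row_mx w (const_mx c) + t *: D) = w + t *: lsubmx D.
Proof. by apply/rowP => i; rewrite !mxE split_l. Qed.

Lemma rsub_shift (R : realType) n (w : 'rV[R]_(n + n)) (c : R) (t : R)
  (D : 'rV[R]_(n + n + 1)) :
  rsubmx (row_mx w (const_mx c) + t *: D) 0 0 = c + t * rsubmx D 0 0.
Proof. by rewrite !mxE split_r !mxE. Qed.

Lemma frechet_dir (R : realType) n (x y s : 'rV[R]_n)
  (hy : forall i, 0 <= y 0 i)
  (hs : forall i, s 0 i * x 0 i = `|x 0 i| /\ `|s 0 i| <= 1) :
  frechet_normal_cone (epigraph (@qfun R n))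
    (row_mx (row_mx x y) (const_mx (qfun (row_mx x y))))
    (row_mx (row_mx (\row_i (y 0 i * s 0 i)) (\row_i `|x 0 i|)) (const_mx (-1))).
Proof.
set w := row_mx x y.
set v := row_mx (\row_i (y 0 i * s 0 i)) (\row_i `|x 0 i|).
move=> d [dk [tk [dkd [tk0 [tpos [tdec hZ]]]]]].
rewrite dotv_row_mx dotv1.
have key k : dotv v (lsubmx (dk k)) - tk k * Cf (lsubmx (dk k)) <= rsubmx (dk k) 0 0.
  have := hZ k; rewrite /epigraph /= lsub_shift rsub_shift => H1.
  have H2 := @q_lower R n x y s hy hs (lsubmx (dk k)) (tk k) (ltW (tpos k)).
  have H3 := le_trans H2 H1.
  rewrite -(ler_pM2l (tpos k)) mulrBr mulrA -expr2.
  move: H3; rewrite -/w -/v; lra.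
have hl : (fun k => lsubmx (dk k)) @ \oo --> lsubmx d.
  exact: (continuous_cvg _ (@continuous_lsubmx R 1 (n + n) 1 d) dkd).
have hr : (fun k => rsubmx (dk k)) @ \oo --> rsubmx d.
  exact: (continuous_cvg _ (@continuous_rsubmx R 1 (n + n) 1 d) dkd).
have hF : (fun k => dotv v (lsubmx (dk k)) - tk k * Cf (lsubmx (dk k))) @ \oo -->
           dotv v (lsubmx d) - 0 * Cf (lsubmx d).
  apply: cvgB.
    exact: (@continuous_cvg _ _ _ _ _ _ (dotv v) _ (@dotv_continuous R _ v (lsubmx d)) hl).
  apply: cvgM => //.
  exact: (@continuous_cvg _ _ _ _ _ _ Cf _ (@Cf_continuous R n (lsubmx d)) hl).
have hG : (fun k => rsubmx (dk k) 0 0) @ \oo --> rsubmx d 0 0.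
  exact: (@coord_cvg R 1 _ _ 0 hr).
have H : dotv v (lsubmx d) - 0 * Cf (lsubmx d) <= rsubmx d 0 0.
  apply: (ler_cvg_to hF hG); exact: nearW.
rewrite mul0r subr0 in H; lra.
Qed.

Lemma dotv_row_mx_r (R : realType) m1 m2 (g : 'rV[R]_(m1 + m2)) (a : 'rV[R]_m1)
  (b : 'rV[R]_m2) :
  dotv g (row_mx a b) = dotv (lsubmx g) a + dotv (rsubmx g) b.
Proof.
rewrite /dotv big_split_ord /=; congr (_ + _); apply: eq_bigr => i _.
  by rewrite row_mxEl mxE.
by rewrite row_mxEr mxE.
Qed.

Lemma dotv1r (R : realType) (c : R) (g : 'rV[R]_1) :
  dotv g (const_mx c) = g 0 0 * c.
Proof. by rewrite /dotv big_ord1 mxE. Qed.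

Lemma fn_ineq (R : realType) n (zk vk : 'rV[R]_(n + n + 1)) (u : 'rV[R]_(n + n))
  (D c : R) :
  epigraph (@qfun R n) zk -> frechet_normal_cone (epigraph (@qfun R n)) zk vk ->
  0 < c ->
  (forall t, 0 < t -> t <= c ->
     qfun (lsubmx zk + t *: u) = qfun (lsubmx zk) + t * D) ->
  dotv (lsubmx vk) u + rsubmx vk 0 0 * D <= 0.
Proof.
move=> ez fn c0 H.
have := fn (row_mx u (const_mx D)).
rewrite dotv_row_mx_r dotv1r; apply.
apply: (@tangent_seg R _ _ _ _ c c0) => t t0 tc.
rewrite /epigraph /=.
have -> : lsubmx (zk + t *: row_mx u (const_mx D)) = lsubmx zk + t *: u.
  by apply/rowP => i; rewrite !mxE split_l.
have -> : rsubmx (zk + t *: row_mx u (const_mx D)) 0 0 = rsubmx zk 0 0 + t * D.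
  by rewrite !mxE split_r !mxE.
rewrite H // lerD2r.
exact: ez.
Qed.

Lemma dir_l (R : realType) n (zk vk : 'rV[R]_(n + n + 1)) (i : 'I_n) (a m c : R) :
  epigraph (@qfun R n) zk -> frechet_normal_cone (epigraph (@qfun R n)) zk vk ->
  0 < c ->
  (forall t, 0 < t -> t <= c ->
    `|lsubmx zk 0 (lshift n i) + t * a| - `|lsubmx zk 0 (lshift n i)| = t * m) ->
  a * lsubmx vk 0 (lshift n i) + rsubmx vk 0 0 * (m * lsubmx zk 0 (rshift n i)) <= 0.
Proof.
move=> ez fn c0 H.
have := @fn_ineq R n zk vk (a *: delta_mx 0 (lshift n i)) (m * lsubmx zk 0 (rshift n i)) c ez fn c0.
rewrite dotv_delta; apply => t t0 tc.
by rewrite qfun_dir_l H // mulrA.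
Qed.

Lemma dir_r (R : realType) n (zk vk : 'rV[R]_(n + n + 1)) (i : 'I_n) (a : R) :
  epigraph (@qfun R n) zk -> frechet_normal_cone (epigraph (@qfun R n)) zk vk ->
  a * lsubmx vk 0 (rshift n i) + rsubmx vk 0 0 * (a * `|lsubmx zk 0 (lshift n i)|) <= 0.
Proof.
move=> ez fn.
have := @fn_ineq R n zk vk (a *: delta_mx 0 (rshift n i)) (a * `|lsubmx zk 0 (lshift n i)|) 1 ez fn ltr01.
rewrite dotv_delta; apply => t t0 tc.
by rewrite qfun_dir_r mulrA.
Qed.

Lemma pointwise (R : realType) n (zk vk : 'rV[R]_(n + n + 1)) (i : 'I_n) :
  epigraph (@qfun R n) zk -> frechet_normal_cone (epigraph (@qfun R n)) zk vk ->
  [/\ lsubmx vk 0 (rshift n i) = - rsubmx vk 0 0 * `|lsubmx zk 0 (lshift n i)|,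
      0 < lsubmx zk 0 (lshift n i) ->
        lsubmx vk 0 (lshift n i) = - rsubmx vk 0 0 * lsubmx zk 0 (rshift n i),
      lsubmx zk 0 (lshift n i) < 0 ->
        lsubmx vk 0 (lshift n i) = rsubmx vk 0 0 * lsubmx zk 0 (rshift n i) &
      `|lsubmx vk 0 (lshift n i)| <= `|rsubmx vk 0 0| * `|lsubmx zk 0 (rshift n i)| ].
Proof.
move=> ez fn.
have r1 := @dir_r R n zk vk i 1 ez fn.
have r2 := @dir_r R n zk vk i (-1) ez fn.
have l1 := @dir_l R n zk vk i 1.
have l2 := @dir_l R n zk vk i (-1).
move: r1 r2 l1 l2.
set X := lsubmx zk 0 (lshift n i).
set Y := lsubmx zk 0 (rshift n i).
set rho := rsubmx vk 0 0.
set g := lsubmx vk 0 (lshift n i).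
set h := lsubmx vk 0 (rshift n i).
move=> r1 r2 l1 l2.
have hpos : 0 < X -> g = - rho * Y.
  move=> Xp.
  have H1 : 1 * g + rho * (1 * Y) <= 0.
    apply: (l1 1 X ez fn Xp) => t t0 tX.
    rewrite !ger0_norm; lra.
  have H2 : -1 * g + rho * (-1 * Y) <= 0.
    apply: (l2 (-1) X ez fn Xp) => t t0 tX.
    rewrite !ger0_norm; lra.
  lra.
have hneg : X < 0 -> g = rho * Y.
  move=> Xn.
  have Xp : 0 < - X by rewrite oppr_gt0.
  have H1 : 1 * g + rho * (-1 * Y) <= 0.
    apply: (l1 (-1) (- X) ez fn Xp) => t t0 tX.
    rewrite !ler0_norm; lra.
  have H2 : -1 * g + rho * (1 * Y) <= 0.
    apply: (l2 1 (- X) ez fn Xp) => t t0 tX.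
    rewrite !ler0_norm; lra.
  lra.
split => //.
- lra.
- case: (ltgtP 0 X) => [Xp|Xn|X0].
  + by rewrite hpos // normrM normrN.
  + by rewrite hneg // normrM.
  have H1 : 1 * g + rho * (1 * Y) <= 0.
    apply: (l1 1 1 ez fn ltr01) => t t0 tX.
    by rewrite -X0 add0r normr0 subr0 !mulr1 ger0_norm // ltW.
  have H2 : -1 * g + rho * (1 * Y) <= 0.
    apply: (l2 1 1 ez fn ltr01) => t t0 tX.
    by rewrite -X0 add0r normr0 subr0 mulr1 mulrN1 normrN ger0_norm // ltW.
  have Hg : `|g| <= - (rho * Y) by rewrite ler_norml; apply/andP; split; lra.
  apply: (le_trans Hg).
  by rewrite -normrM -normrN ler_norm.
Qed.

Theorem mainTheorem1 (R : realType) (n : nat) (x y : 'rV[R]_n)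
  (hy : forall i, 0 <= y 0 i) (v : 'rV[R]_(n + n)) :
  limiting_subdiff (@qfun R n) (row_mx x y) v <->
  exists s : 'rV[R]_n,
    (forall i, (0 < x 0 i -> s 0 i = 1) /\
               (x 0 i = 0 -> -1 <= s 0 i <= 1) /\
               (x 0 i < 0 -> s 0 i = -1)) /\
    v = row_mx (\row_i (y 0 i * s 0 i)) (\row_i `|x 0 i|).
Proof.
split.
- rewrite /limiting_subdiff /limiting_normal_cone /=.
  case=> zk [vk [hz [hv [ez fn]]]].
  have hW : (fun k => lsubmx (zk k)) @ \oo --> row_mx x y.
    rewrite -[X in _ --> X](@row_mxKl _ 1 (n + n) 1 (row_mx x y) (const_mx (qfun (row_mx x y)))).
    exact: (continuous_cvg _ (@continuous_lsubmx R 1 (n + n) 1 _) hz).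
  have hG : (fun k => lsubmx (vk k)) @ \oo --> v.
    rewrite -[X in _ --> X](@row_mxKl _ 1 (n + n) 1 v (const_mx (-1))).
    exact: (continuous_cvg _ (@continuous_lsubmx R 1 (n + n) 1 _) hv).
  have hrho : (fun k => rsubmx (vk k) 0 0) @ \oo --> (-1 : R).
    have H : (fun k => rsubmx (vk k)) @ \oo --> rsubmx (row_mx v (const_mx (-1))).
      exact: (continuous_cvg _ (@continuous_rsubmx R 1 (n + n) 1 _) hv).
    have := @coord_cvg R 1 _ _ 0 H.
    by rewrite row_mxKr mxE.
  have cX i : (fun k => lsubmx (zk k) 0 (lshift n i)) @ \oo --> x 0 i.
    have := @coord_cvg R (n + n) _ _ (lshift n i) hW.
    by rewrite row_mxEl.
  have cY i : (fun k => lsubmx (zk k) 0 (rshift n i)) @ \oo --> y 0 i.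
    have := @coord_cvg R (n + n) _ _ (rshift n i) hW.
    by rewrite row_mxEr.
  have cgl i : (fun k => lsubmx (vk k) 0 (lshift n i)) @ \oo --> v 0 (lshift n i).
    exact: (@coord_cvg R (n + n) _ _ (lshift n i) hG).
  have cgr i : (fun k => lsubmx (vk k) 0 (rshift n i)) @ \oo --> v 0 (rshift n i).
    exact: (@coord_cvg R (n + n) _ _ (rshift n i) hG).
  have P k i := @pointwise R n (zk k) (vk k) i (ez k) (fn k).
  have vr i : v 0 (rshift n i) = `|x 0 i|.
    have := @near_eq_lim R _ _ _ _ (cgr i) (cvgM (cvgN hrho) (cvg_norm (cX i))).
    rewrite opprK mul1r; apply; apply: nearW => k.
    by case: (P k i).
  have vpos i : 0 < x 0 i -> v 0 (lshift n i) = y 0 i.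
    move=> xp.
    have := @near_eq_lim R _ _ _ _ (cgl i) (cvgM (cvgN hrho) (cY i)).
    rewrite opprK mul1r; apply.
    apply: filterS (cvgr_gt _ (cX i) _ xp) => k Xp.
    by case: (P k i) => _ h _ _; apply: h.
  have vneg i : x 0 i < 0 -> v 0 (lshift n i) = - y 0 i.
    move=> xn.
    have := @near_eq_lim R _ _ _ _ (cgl i) (cvgM hrho (cY i)).
    rewrite mulN1r; apply.
    apply: filterS (cvgr_lt _ (cX i) _ xn) => k Xn.
    by case: (P k i) => _ _ h _; apply: h.
  have vabs i : `|v 0 (lshift n i)| <= y 0 i.
    have := ler_cvg_to (cvg_norm (cgl i)) (cvgM (cvg_norm hrho) (cvg_norm (cY i))).
    rewrite normrN normr1 mul1r (ger0_norm (hy i)); apply.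
    apply: nearW => k.
    by case: (P k i).
  exists (\row_i (if 0 < x 0 i then 1 else if x 0 i < 0 then -1
                  else v 0 (lshift n i) / y 0 i)).
  split.
  + move=> i; rewrite !mxE; split; first by move=> ->.
    split.
      move=> x0; rewrite x0 ltxx /= -ler_norml normrM normfV.
      have [y0|y0] := eqVneq (y 0 i) 0.
        by rewrite y0 normr0 invr0 mulr0 ler01.
      rewrite ler_pdivrMr ?normr_gt0 // mul1r (ger0_norm (hy i)).
      exact: vabs.
    by move=> xn; rewrite (lt_gtF xn) xn.
  + rewrite -[v]hsubmxK; congr row_mx; apply/rowP => i; rewrite !mxE.
      case: (ltgtP 0 (x 0 i)) => [xp|xn|x0].
      * by rewrite mulr1; apply: vpos.
      * by rewrite mulrN1; apply: vneg.
      have [y0|y0] := eqVneq (y 0 i) 0.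
        have := vabs i; rewrite y0 normr_le0 => /eqP ->.
        by rewrite mul0r.
      by rewrite split_l mxE mulrCA mulfV // mulr1.
    exact: vr.
- case=> s [hs ->].
  rewrite /limiting_subdiff /limiting_normal_cone /=.
  exists (fun=> row_mx (row_mx x y) (const_mx (qfun (row_mx x y)))).
  exists (fun=> row_mx (row_mx (\row_i (y 0 i * s 0 i)) (\row_i `|x 0 i|)) (const_mx (-1))).
  split; first exact: cvg_cst.
  split; first exact: cvg_cst.
  split.
    by move=> k; rewrite /epigraph /= row_mxKl row_mxKr mxE.
  move=> k; apply: frechet_dir => // i.
  have [h1 [h2 h3]] := hs i.
  case: (ltgtP 0 (x 0 i)) => [xp|xn|x0].
  + by rewrite h1 // mul1r normr1 gtr0_norm.
  + by rewrite h3 // mulN1r normrN normr1 ltr0_norm.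
  + rewrite -x0 mulr0 normr0; split => //.
    by rewrite ler_norml h2.
Qed.
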